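(* Let $v_1,\dots,v_n\in\mathbb{H}^d$, not all zero, and write $V=[v_1,\dots,v_n]=V_1+V_2j$ with $V_1,V_2\in\mathbb{C}^{d\times n}$. Let $A=\frac1d\sum_j\|v_j\|^2$. The following are equivalent: (i) $V_{\mathbb{C}}=[[v_1]_{\mathbb{C}},\dots,[v_n]_{\mathbb{C}}]=\begin{pmatrix}V_1\\ \overline{V_2}\end{pmatrix}\in\mathbb{C}^{2d\times n}$ is a tight frame for $\mathbb{C}^{2d}$; (ii) $V_1V_1^*=V_2V_2^*=\frac12AI$ and $V_1V_2^T=V_2V_1^T=0$; (iii) $(V_1^*V_1+V_2^T\overline{V_2})^2=\frac12A\,(V_1^*V_1+V_2^T\overline{V_2})$; (iv) $\sum_j\sum_k|\operatorname{Co}_1(\langle v_j,v_k\rangle)|^2=\frac1{2d}\big(\sum_j\|v_j\|^2\big)^2$.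
   Context: Every quaternion (and entrywise every quaternionic vector or matrix) can be written uniquely as $z+wj$ with $z,w$ complex; note $jz=\bar zj$. The map $[\cdot]_{\mathbb{C}}:\mathbb{H}^d\to\mathbb{C}^{2d}$ is $z+wj\mapsto\begin{pmatrix}z\\ \bar w\end{pmatrix}$ ($z,w\in\mathbb{C}^d$), which is $\mathbb{C}$-linear for right scalar multiplication. For $q=z+wj\in\mathbb{H}$ define $\operatorname{Co}_1(q)=z$ and $\operatorname{Co}_2(q)=\bar w$. Inner products are Euclidean, $\langle v,w\rangle=\sum_j\overline{w_j}v_j$, on $\mathbb{H}^d$ and $\mathbb{C}^{2d}$. A sequence $(u_j)$ is a tight frame for $\mathbb{F}^D$ if $\sum_ju_ju_j^*=cI$ for some $c>0$. $A^T$ is the transpose, $A^*$ the conjugate transpose, $\overline{A}$ the entrywise conjugate. *)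

(* Defs.v *)
(* Complex numbers: an arbitrary numClosedFieldType C
   (e.g. complex R for R : rcfType), with conjugation z^* . *)
From HB Require Import structures.
From mathcomp Require Import all_boot all_order all_algebra.
Set Implicit Arguments. Unset Strict Implicit. Unset Printing Implicit Defensive.
Import Order.TTheory GRing.Theory Num.Theory.
Local Open Scope ring_scope.

Section Quat.
Variable C : numClosedFieldType.

(* A quaternion q = z + w j is represented by the pair (z, w). *)
Definition quat := (C * C)%type.
Definition qz (q : quat) : C := q.1.
Definition qw (q : quat) : C := q.2.
Definition qzero : quat := (0, 0).
Definition qadd (p q : quat) : quat := (p.1 + q.1, p.2 + q.2).
(* (a + b j)(c + d j) = (a c - b conj d) + (a d + b conj c) j, using j z = conj z j, j^2=-1 *)
Definition qmul (p q : quat) : quat :=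
  (p.1 * q.1 - p.2 * (q.2)^*, p.1 * q.2 + p.2 * (q.1)^*).
Definition qconj (q : quat) : quat := ((q.1)^*, - q.2).

Definition Co1 (q : quat) : C := q.1.
Definition Co2 (q : quat) : C := (q.2)^*.

Definition hdot (d : nat) (v w : 'I_d -> quat) : quat :=
  \big[qadd/qzero]_(i < d) qmul (qconj (w i)) (v i).

Definition hnorm2 (d : nat) (v : 'I_d -> quat) : C :=
  \sum_(i < d) (`|qz (v i)| ^+ 2 + `|qw (v i)| ^+ 2).

Definition toC (d : nat) (v : 'I_d -> quat) : 'cV[C]_(d + d) :=
  col_mx (\col_i qz (v i)) (\col_i (qw (v i))^*).

Definition cmx (m p : nat) (M : 'M[C]_(m, p)) : 'M[C]_(m, p) := map_mx (@Num.conj_op C) M.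
Definition adjmx (m p : nat) (M : 'M[C]_(m, p)) : 'M[C]_(p, m) := (cmx M)^T.

Definition tight_frame (D n : nat) (U : 'M[C]_(D, n)) : Prop :=
  exists c : C, 0 < c /\ U *m adjmx U = c%:M.

End Quat.

(* Main.v *)
Require Import Defs.
From mathcomp Require Import all_boot all_order all_algebra ring.
Import Order.TTheory GRing.Theory Num.Theory.
Local Open Scope ring_scope.
Set Implicit Arguments. Unset Strict Implicit.

Section Helpers.
Variable C : numClosedFieldType.

Lemma cmxE m p (M : 'M[C]_(m,p)) i j : cmx M i j = (M i j)^*.
Proof. by rewrite /cmx mxE. Qed.
Lemma adjmxE m p (M : 'M[C]_(m,p)) i j : adjmx M i j = (M j i)^*.
Proof. by rewrite /adjmx mxE cmxE. Qed.
Lemma cmxK m p (M : 'M[C]_(m,p)) : cmx (cmx M) = M.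
Proof. by apply/matrixP=> i j; rewrite !cmxE conjCK. Qed.
Lemma adjmxK m p (M : 'M[C]_(m,p)) : adjmx (adjmx M) = M.
Proof. by apply/matrixP=> i j; rewrite !adjmxE conjCK. Qed.
Lemma cmxM m p q (A : 'M[C]_(m,p)) (B : 'M[C]_(p,q)) :
  cmx (A *m B) = cmx A *m cmx B.
Proof.
apply/matrixP=> i j; rewrite cmxE !mxE rmorph_sum; apply: eq_bigr=> k _.
by rewrite rmorphM !cmxE.
Qed.
Lemma adjmxM m p q (A : 'M[C]_(m,p)) (B : 'M[C]_(p,q)) :
  adjmx (A *m B) = adjmx B *m adjmx A.
Proof. by rewrite /adjmx cmxM trmx_mul. Qed.
Lemma cmxB m p (A B : 'M[C]_(m,p)) : cmx (A - B) = cmx A - cmx B.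
Proof. by apply/matrixP=> i j; rewrite !(cmxE, mxE) rmorphB. Qed.
Lemma cmx0 m p : cmx (0 : 'M[C]_(m,p)) = 0.
Proof. by apply/matrixP=> i j; rewrite !(cmxE, mxE) rmorph0. Qed.
Lemma adjmxB m p (A B : 'M[C]_(m,p)) : adjmx (A - B) = adjmx A - adjmx B.
Proof. by rewrite /adjmx cmxB linearB. Qed.
Lemma cmx_scalar D (c : C) : c \is Num.real -> cmx (c%:M : 'M_D) = c%:M.
Proof.
move=> cr; apply/matrixP=> i j; rewrite !(cmxE, mxE).
by case: (i == j); rewrite /= ?mulr1n ?mulr0n ?conj_Creal ?rmorph0.
Qed.
Lemma adjmx_scalar D (c : C) : c \is Num.real -> adjmx (c%:M : 'M_D) = c%:M.
Proof. by move=> cr; rewrite /adjmx cmx_scalar // tr_scalar_mx. Qed.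
Lemma cmxT m p (A : 'M[C]_(m,p)) : cmx (A^T) = adjmx A.
Proof. by apply/matrixP=> i j; rewrite !(cmxE, adjmxE, mxE). Qed.

Lemma cmx_adj m p (A : 'M[C]_(m,p)) : cmx (adjmx A) = A^T.
Proof. by rewrite -cmxT cmxK. Qed.

Lemma tr_adj m p (X : 'M[C]_(m,p)) :
  \tr (X *m adjmx X) = \sum_i \sum_j `|X i j| ^+ 2.
Proof.
rewrite /mxtrace; apply: eq_bigr=> i _; rewrite mxE; apply: eq_bigr=> j _.
by rewrite adjmxE normCK.
Qed.

Lemma tr_adj_eq0 m p (X : 'M[C]_(m,p)) : \tr (X *m adjmx X) = 0 -> X = 0.
Proof.
rewrite tr_adj => h; apply/matrixP=> i j; rewrite mxE.
have h1 := psumr_eq0P (fun i _ => sumr_ge0 _ (fun j _ => exprn_ge0 2 (normr_ge0 (X i j)))) h.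
have h2 := psumr_eq0P (fun j _ => exprn_ge0 2 (normr_ge0 (X i j))) (h1 i isT).
by move: (h2 j isT) => /eqP; rewrite expf_eq0 /= normr_eq0 => /eqP.
Qed.

Lemma key D (M : 'M[C]_D) (c : C) : adjmx M = M -> c \is Num.real ->
  \tr M = D%:R * c -> (M = c%:M <-> \tr (M *m M) = D%:R * c ^+ 2).
Proof.
move=> hM cr htr; split.
  by move=> ->; rewrite mul_scalar_mx scale_scalar_mx mxtrace_scalar mulr_natl expr2.
move=> h2; apply/eqP; rewrite -subr_eq0; apply/eqP; apply: tr_adj_eq0.
rewrite adjmxB hM adjmx_scalar // mulmxBl !mulmxBr !mul_mx_scalar.
rewrite !linearB /= !mxtraceZ h2 htr.
set x := D%:R.
by rewrite mul_scalar_mx mxtraceZ htr mxtrace_scalar -mulr_natl; ring.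
Qed.

Lemma Co1_hdot d (v w : 'I_d -> quat C) :
  Co1 (hdot v w) = \sum_i (((w i).1)^* * (v i).1 + (w i).2 * ((v i).2)^*).
Proof.
rewrite /Co1 /hdot (@big_morph _ _ (fun q : quat C => q.1) 0 +%R (qzero C) (@qadd C)) //.
by apply: eq_bigr=> i _; rewrite /= mulNr opprK.
Qed.

End Helpers.

Theorem lemma9 (C : numClosedFieldType) (d n : nat) (v : 'I_n -> 'I_d -> quat C) :
  (exists j i, v j i != (0, 0)) ->
  let V1 : 'M[C]_(d, n) := \matrix_(i, j) qz (v j i) in
  let V2 : 'M[C]_(d, n) := \matrix_(i, j) qw (v j i) in
  let A : C := (d%:R)^-1 * \sum_(j < n) hnorm2 (v j) in
  let VC : 'M[C]_(d + d, n) := \matrix_(i, j) toC (v j) i ord0 in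
  let G : 'M[C]_n := adjmx V1 *m V1 + V2^T *m cmx V2 in
  [/\ tight_frame VC <->
        [/\ V1 *m adjmx V1 = (A / 2)%:M, V2 *m adjmx V2 = (A / 2)%:M,
            V1 *m V2^T = 0 & V2 *m V1^T = 0],
      tight_frame VC <-> G *m G = (A / 2) *: G
    & tight_frame VC <->
        \sum_(j < n) \sum_(k < n) `|Co1 (hdot (v j) (v k))| ^+ 2
        = (2 * d%:R)^-1 * (\sum_(j < n) hnorm2 (v j)) ^+ 2].
Proof.
move=> [j0 [i0 hv]] V1 V2 A VC G.
set S := \sum_(j < n) hnorm2 (v j).
set c := A / 2.
have dpos : (0 < d)%N by apply: leq_ltn_trans (ltn_ord i0).
have dR : (d%:R : C) != 0 by rewrite pnatr_eq0 -lt0n.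
have hVC : VC = col_mx V1 (cmx V2).
  apply/matrixP=> i j; rewrite /VC /toC mxE.
  by case: (split_ordP i) => k ->; rewrite ?col_mxEu ?col_mxEd !(mxE, cmxE).
have hnn : forall q : quat C, 0 <= `|qz q| ^+ 2 + `|qw q| ^+ 2.
  by move=> q; rewrite addr_ge0 // exprn_ge0.
have S0 : 0 <= S by rewrite sumr_ge0 // => j _; rewrite sumr_ge0.
have Spos : 0 < S.
  rewrite lt_def S0 andbT psumr_neq0; last by move=> j _; rewrite sumr_ge0.
  apply/hasP; exists j0; first by rewrite mem_index_enum.
  rewrite lt_def sumr_ge0 // andbT psumr_neq0 //.
  apply/hasP; exists i0; first by rewrite mem_index_enum.
  rewrite lt_def hnn andbT paddr_eq0 ?exprn_ge0 // !expf_eq0 /= !normr_eq0.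
  by move: hv; case: (v j0 i0) => a b; rewrite xpair_eqE negb_and.
have cpos : 0 < c by rewrite /c /A divr_gt0 // mulr_gt0 // invr_gt0 ltr0n.
have cr : c \is Num.real by rewrite gtr0_real.
have adjc : forall m1 m2 (X : 'M[C]_(m1, n)) (Y : 'M[C]_(m2, n)),
    adjmx (col_mx X Y) = row_mx (adjmx X) (adjmx Y).
  by move=> m1 m2 X Y; rewrite /adjmx /cmx map_col_mx tr_col_mx.
set M := VC *m adjmx VC.
have hMb : M = block_mx (V1 *m adjmx V1) (V1 *m V2^T) (cmx V2 *m adjmx V1) (cmx V2 *m V2^T).
  by rewrite /M hVC adjc mul_col_row {2 4}/adjmx cmxK.
have hG : G = adjmx VC *m VC.
  by rewrite hVC adjc mul_row_col {2}/adjmx cmxK.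
have htr : \tr M = (d + d)%N%:R * c.
  rewrite (_ : (d + d)%N%:R * c = S); last first.
    by rewrite /c /A natrD -/S; field; rewrite ?dR ?pnatr_eq0.
  rewrite /M tr_adj hVC big_split_ord /= /S /hnorm2.
  rewrite (eq_bigr (fun j => \sum_(i < d) `|qz (v j i)| ^+ 2 + \sum_(i < d) `|qw (v j i)| ^+ 2));
    last by move=> j _; rewrite big_split.
  rewrite big_split /= [X in _ = X + _]exchange_big [X in _ = _ + X]exchange_big /=.
  congr (_ + _); apply: eq_bigr => i _; apply: eq_bigr => j _.
    by rewrite col_mxEu mxE.
  by rewrite col_mxEd cmxE mxE norm_conjC.
have hMa : adjmx M = M by rewrite /M adjmxM adjmxK.
have tight : tight_frame VC <-> M = c%:M.
  split; last by move=> h; exists c.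
  case=> c' [_ h]; have : \tr M = (d + d)%N%:R * c' by rewrite /M h mxtrace_scalar mulr_natl.
  rewrite htr => /mulfI -> //; by rewrite pnatr_eq0 addn_eq0 negb_and -lt0n dpos.
have trMM : \tr (M *m M) = \tr (G *m G).
  by rewrite hG /M !mulmxA mxtrace_mulC !mulmxA.
have hkey := key hMa cr htr.
have hGa : adjmx G = G by rewrite hG adjmxM adjmxK.
split.
- rewrite tight hMb (scalar_mx_block d d c); split.
    move/eq_block_mx=> [h1 h2 h3 h4]; split => //.
      by move/(congr1 (@cmx _ _ _)): h4; rewrite cmxM cmxK cmxT cmx_scalar.
    by move/(congr1 (@cmx _ _ _)): h3; rewrite cmxM cmxK cmx_adj cmx0.
  case=> h1 h2 h3 h4; rewrite h1 h3 -cmxT -cmxM h4 cmx0 -cmx_adj -cmxM h2 cmx_scalar //.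
- rewrite tight; split.
    move=> hM; rewrite hG mulmxA -(mulmxA (adjmx VC)) -/M hM mul_mx_scalar -scalemxAl //.
  move=> h; apply/hkey; rewrite trMM h mxtraceZ hG mxtrace_mulC -/M htr.
  by rewrite mulrCA expr2.
- have e1 : \sum_(j < n) \sum_(k < n) `|Co1 (hdot (v j) (v k))| ^+ 2 = \tr (G *m G).
    rewrite -{2}hGa tr_adj exchange_big; apply: eq_bigr => k _; apply: eq_bigr => j _.
    congr (`|_| ^+ 2); rewrite Co1_hdot /G /V1 /V2 !mxE -big_split; apply: eq_bigr => i _.
    by rewrite !(adjmxE, cmxE, mxE).
  have e2 : (2 * d%:R)^-1 * S ^+ 2 = (d + d)%N%:R * c ^+ 2.
    by rewrite /c /A natrD -/S; field; rewrite ?dR ?pnatr_eq0.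
  by rewrite e1 e2 -trMM tight.
Qed.
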